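(* If $A\subseteq\Omega$ is finite, then $A\in\mathcal{B}_{\mathcal{L}}$ and $\widehat{\mu}(A)=0$; that is, $A=\bigcap_n A^{(n)}$ and $\lim_{n\to\infty}\mu(A^{(n)})=0$.
   Context: For $n\ge1$, $\Omega_n$ is the set of strings $\alpha_0\alpha_1\cdots\alpha_n$ with $\alpha_k\in\{0,1\}$, $\alpha_0=0$. For $\omega=\alpha_0\cdots\alpha_n$, $\omega'=\alpha'_0\cdots\alpha'_n\in\Omega_n$ let $D^n(\omega,\omega')=2^{-n}\prod_{k=1}^n i^{|\alpha_k-\alpha_{k-1}|}\prod_{k=1}^n i^{-|\alpha'_k-\alpha'_{k-1}|}\,\delta_{\alpha_n\alpha'_n}$ ($i=\sqrt{-1}$) and for $E\subseteq\Omega_n$, $\mu_n(E)=\sum_{\omega,\omega'\in E}D^n(\omega,\omega')$. $\Omega$ is the set of infinite sequences $\alpha_0\alpha_1\cdots$ with $\alpha_k\in\{0,1\}$, $\alpha_0=0$. A cylinder set is a set $\{\alpha_0\alpha_1\cdots\in\Omega:\alpha_0\cdots\alpha_n\in E\}$ with $E\subseteq\Omega_n$, and $\mu$ of it is $\mu_n(E)$ (well defined). For $A\subseteq\Omega$ and $n\ge0$, $A^{(n)}=\{\omega\in\Omega:\text{some }\omega'\in A\text{ has the same first }n+1\text{ entries as }\omega\}$ (a cylinder set). $A$ is a lower set if $A=\bigcap_nA^{(n)}$; $A$ is beneficial if $\lim_n\mu(A^{(n)})$ exists and is finite, with $\widehat{\mu}(A)$ that limit; $\mathcal{B}_{\mathcal{L}}$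 is the collection of beneficial lower sets. *)

(* Defs.v *)
From HB Require Import structures.
From mathcomp Require Import all_boot all_order all_algebra.
From mathcomp Require Import all_classical all_reals.
From mathcomp.real_closed Require Import complex.
Import Order.TTheory GRing.Theory Num.Theory.

Set Implicit Arguments.
Unset Strict Implicit.
Unset Printing Implicit Defensive.

Local Open Scope ring_scope.
Local Open Scope classical_set_scope.
Local Open Scope complex_scope.

(* Omega : infinite 0/1 sequences alpha_0 alpha_1 ... with alpha_0 = 0
   (0 = false, 1 = true). *)
Definition Omega : set (nat -> bool) := [set w | w 0%N = false].

(* Omega_n : strings alpha_0 ... alpha_n with alpha_0 = 0, encoded as
   finite functions on 'I_n.+1 (indices 0..n). *)
Definition word (n : nat) := {ffun 'I_n.+1 -> bool}.

Definition in_Omega_n (n : nat) (w : word n) : bool := w ord0 == false.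

Definition jump (n : nat) (w : word n) (k : nat) : nat :=
  (w (inord k) != w (inord k.-1)).

Definition Dn (R : rcfType) (n : nat) (w w' : word n) : R[i] :=
  (2%:R ^- n)
  * (\prod_(1 <= k < n.+1) ('i ^+ jump w k))
  * (\prod_(1 <= k < n.+1) ('i ^- jump w' k))
  * (w ord_max == w' ord_max)%:R.

Definition mu_n (R : rcfType) (n : nat) (E : {set word n}) : R[i] :=
  \sum_(w in E) \sum_(w' in E) Dn R w w'.

Definition prefix (n : nat) (w : nat -> bool) : word n :=
  [ffun k : 'I_n.+1 => w (nat_of_ord k)].

Definition prefixes (n : nat) (A : set (nat -> bool)) : {set word n} :=
  [set u : word n | `[< exists2 a, A a & prefix n a = u >]].

(* A^{(n)} : sequences agreeing in the first n+1 entries with some member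
   of A (intersected with Omega, since A^{(n)} is a subset of Omega). *)
Definition cyl (A : set (nat -> bool)) (n : nat) : set (nat -> bool) :=
  [set w | Omega w /\ exists2 a, A a & forall k, (k <= n)%N -> w k = a k].

(* mu of the cylinder set A^{(n)} = {w in Omega : w_0..w_n in prefixes n A} *)
Definition mu_cyl (R : rcfType) (A : set (nat -> bool)) (n : nat) : R[i] :=
  mu_n R (prefixes n A).

Definition lower_set (A : set (nat -> bool)) : Prop :=
  A = \bigcap_(n in [set: nat]) cyl A n.

Definition cvgC (R : rcfType) (u : nat -> R[i]) (l : R[i]) : Prop :=
  forall e : R, 0 < e -> exists N : nat, forall n, (N <= n)%N ->
    `|u n - l| < e%:C.

Definition beneficial (R : rcfType) (A : set (nat -> bool)) : Prop :=
  exists l : R[i], cvgC (mu_cyl R A) l.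

Definition in_BL (R : rcfType) (A : set (nat -> bool)) : Prop :=
  lower_set A /\ beneficial R A.

(* Main.v *)
Require Import Defs.
From HB Require Import structures.
From mathcomp Require Import all_boot all_order all_algebra.
From mathcomp Require Import all_classical all_reals.
From mathcomp.real_closed Require Import complex.
From mathcomp Require Import ring.
Import Order.TTheory GRing.Theory Num.Theory.
Local Open Scope ring_scope.
Local Open Scope classical_set_scope.
Local Open Scope complex_scope.

Lemma normi (R : rcfType) : `|'i : R[i]| = 1.
Proof. by rewrite normc_def /= expr0n /= add0r expr1n sqrtr1. Qed.

Lemma norm_Dn (R : rcfType) n (w w' : word n) : `|Dn R w w'| <= 2%:R ^- n.
Proof.
rewrite /Dn !normrM normfV normrX normr_nat.
rewrite (_ : `|\prod_(1 <= k < n.+1) 'i ^+ jump w k| = 1); last first.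
  by rewrite normr_prod big1 // => k _; rewrite normrX normi expr1n.
rewrite (_ : `|\prod_(1 <= k < n.+1) 'i ^- jump w' k| = 1); last first.
  by rewrite normr_prod big1 // => k _; rewrite normfV normrX normi expr1n invr1.
rewrite !mulr1 -[X in _ <= X]mulr1 ler_wpM2l //; first by rewrite invr_ge0 exprn_ge0.
by case: (_ == _); rewrite normr_nat.
Qed.

Lemma norm_mu (R : rcfType) {n} (E : {set word n}) :
  `|mu_n R E| <= (#|E| * #|E|)%:R * 2%:R ^- n.
Proof.
rewrite /mu_n; apply: (le_trans (ler_norm_sum _ _ _)).
apply: le_trans (_ : \sum_(w in E) (#|E|%:R * 2%:R ^- n) <= _).
  apply: ler_sum => w _; apply: (le_trans (ler_norm_sum _ _ _)).
  apply: le_trans (_ : \sum_(w' in E) (2%:R ^- n : R[i]) <= _).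
    by apply: ler_sum => w' _; apply: norm_Dn.
  by rewrite sumr_const mulr_natl.
by rewrite sumr_const natrM -mulr_natr; rewrite le_eqVlt; apply/orP; left; apply/eqP; ring.
Qed.

Lemma sep_list (w : nat -> bool) (s : seq (nat -> bool)) :
  (forall a, a \in s -> a <> w) ->
  exists N, forall a, a \in s -> exists2 k, (k <= N)%N & a k <> w k.
Proof.
elim: s => [|b s IH] H; first by exists 0%N => a; rewrite in_nil.
have [N HN] : exists N, forall a, a \in s -> exists2 k, (k <= N)%N & a k <> w k.
  by apply: IH => a as_; apply: H; rewrite inE as_ orbT.
have [k Hk] : exists k, b k <> w k.
  apply: contra_notP (H b (mem_head _ _)) => Hn.
  by apply: funext => k; apply: contra_notP (Hn) => bk; exists k.
exists (maxn k N) => a; rewrite inE => /orP[/eqP -> | /HN [j Hj aj]].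
  by exists k => //; rewrite leq_maxl.
by exists j => //; rewrite (leq_trans Hj) // leq_maxr.
Qed.

Theorem lemma3p4 (R : realType) (A : set (nat -> bool)) :
  A `<=` Omega -> finite_set A ->
  in_BL R A /\ cvgC (mu_cyl R A) 0.
Proof.
move=> AO fA.
set s : seq (nat -> bool) := finmap.enum_fset (fset_set A).
have sA : forall a, (a \in s) = `[< A a >].
  move=> a; have := in_fset_set fA a; rewrite /s => ->.
  by [].
have cv : cvgC (mu_cyl R A) 0.
  move=> e e0.
  set m := size s.
  exists (Num.Def.trunc ((m * m)%:R / e)).+1 => n Hn.
  rewrite subr0.
  have card : (#|prefixes n A| <= m)%N.
    have sub : prefixes n A \subset [pred u : word n | u \in map (Defs.prefix n) s].
      apply/fintype.subsetP => u.
      rewrite inE => /asboolP [a Aa <-]; rewrite inE; apply: map_f.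
      by rewrite sA; apply/asboolP.
    by rewrite (leq_trans (subset_leq_card sub)) // (leq_trans (card_size _)) // size_map.
  rewrite /mu_cyl; apply: (le_lt_trans (norm_mu R (prefixes n A))).
  have le1 : ((#|prefixes n A| * #|prefixes n A|)%:R * 2%:R ^- n : R[i]) <= (m * m)%:R * 2%:R ^- n.
    by rewrite ler_wpM2r ?invr_ge0 ?exprn_ge0 // ler_nat leq_mul.
  apply: (le_lt_trans le1).
  have -> : ((m * m)%:R * 2%:R ^- n : R[i]) = ((m * m)%:R * 2%:R ^- n : R)%:C.
    by rewrite [RHS]rmorphM [X in _ = _ * X]fmorphV [X in _ = _ * X^-1]rmorphXn !rmorph_nat.
  rewrite ltcR ltr_pdivrMr ?exprn_gt0 //.
  have h1 : (m * m)%:R / e < (Num.Def.trunc ((m * m)%:R / e)).+1%:R.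
    by rewrite -truncn_lt_nat ?ltnSn // divr_ge0 // ltW.
  have h2 : ((Num.Def.trunc ((m * m)%:R / e)).+1%:R : R) <= 2%:R ^+ n.
    by rewrite -natrX ler_nat (leq_trans Hn) // ltnW // ltn_expl.
  rewrite -ltr_pdivrMl // mulrC.
  exact: lt_le_trans h1 h2.
split=> //; split; last by exists 0.
rewrite /lower_set; apply/seteqP; split.
  move=> a Aa n _; split; first exact: AO.
  by exists a.
move=> w Hw; apply: contrapT => nAw.
have [N HN] : exists N, forall a, a \in s -> exists2 k, (k <= N)%N & a k <> w k.
  by apply: sep_list => a as_ aw; apply: nAw; move: as_; rewrite sA aw => /asboolP.
have [_ [a Aa Ha]] := Hw N I.
have as_ : a \in s by rewrite sA; apply/asboolP.
have [k kN ak] := HN a as_.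
by apply: ak; rewrite Ha.
Qed.
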